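(* Let $B\subseteq A$ be commutative unital $\mathbb{R}$-algebras, let $Q'\subseteq A$ be an archimedean quadratic module of $A$, and set $Q:=Q'\cap B$. Then the restriction map $p\colon K_{Q',Y_A}\to K_{Q,Y_B}$, $y\mapsto y|_B$, is surjective. Consequently, if moreover $B\subseteq A\subseteq\mathbb{R}^X$ for a set $X$ and $K_{Q',X}=X$, then $m(X)=K_{Q',Y_A}$ implies $m(X)=K_{Q,Y_B}$, and $\overline{m(X)}=K_{Q',Y_A}$ implies $\overline{m(X)}=K_{Q,Y_B}$.
   Context: A quadratic module of a commutative unital $\mathbb{R}$-algebra $C$ is a subset $Q\subseteq C$ with $Q+Q\subseteq Q$, $c^2Q\subseteq Q$ for all $c\in C$, and $1\in Q$; it is archimedean if for every $c\in C$ there is an integer $n\ge1$ with $n+c\in Q$. $Y_C$ is the set of unital $\mathbb{R}$-algebra homomorphisms $C\to\mathbb{R}$, with the weakest topology making all maps $y\mapsto y(c)$ continuous; $K_{Q,Y_C}:=\{y\in Y_C\mid y(g)\ge0\ \forall g\in Q\}$. For $C\subseteq\mathbb{R}^X$: $K_{Q,X}:=\{x\in X\mid g(x)\ge0\ \forall g\in Q\}$ and $m\colon X\to Y_C$, $m(x)(c)=c(x)$; overlines denote closure in $Y_C$. *)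

(* Defs.v *)
From HB Require Import structures.
From mathcomp Require Import all_boot all_order all_algebra.
From mathcomp Require Import boolp classical_sets reals.
Set Implicit Arguments. Unset Strict Implicit. Unset Printing Implicit Defensive.
Import Order.TTheory GRing.Theory Num.Theory.
Local Open Scope ring_scope.
Local Open Scope classical_set_scope.

Definition quadratic_module (R : realType) (C : comAlgType R) (Q : set C) :=
  [/\ (forall a b, Q a -> Q b -> Q (a + b)),
      (forall c g, Q g -> Q (c ^+ 2 * g)) & Q 1].

Definition archimedean_qm (R : realType) (C : comAlgType R) (Q : set C) :=
  forall c : C, exists n : nat, (1 <= n)%N /\ Q (n%:R + c).

(* Unital R-algebra homomorphisms C -> R, i.e. the elements of Y_C
   (represented as functions C -> R). *)
Definition is_char (R : realType) (C : comAlgType R) (y : C -> R) :=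
  [/\ y 1 = 1,
      (forall a b, y (a + b) = y a + y b),
      (forall a b, y (a * b) = y a * y b) &
      (forall (r : R) a, y (r *: a) = r * y a)].

Definition Ychar (R : realType) (C : comAlgType R) : set (C -> R) :=
  [set y | is_char y].

Definition KQY (R : realType) (C : comAlgType R) (Q : set C) : set (C -> R) :=
  [set y | is_char y /\ forall g, Q g -> 0 <= y g].

(* Closure in Y_C for the weakest topology making all evaluation maps
   y |-> y(c) continuous: y is in the closure of S iff y is in Y_C and every
   basic open neighbourhood {z | |z c_i - y c_i| < eps, i = 1..k} of y meets S. *)
Definition Yclosure (R : realType) (C : comAlgType R) (S : set (C -> R)) :
  set (C -> R) :=
  [set y | is_char y /\
     forall (cs : seq C) (eps : R), 0 < eps ->
       exists2 z, S z & forall c, c \in cs -> `|z c - y c| < eps].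

(* Main.v *)
Require Import Defs.
From HB Require Import structures.
From mathcomp Require Import all_boot all_order all_algebra.
From mathcomp Require Import boolp classical_sets reals.
From mathcomp Require Import ring lra.
Import Order.TTheory GRing.Theory Num.Theory.
Local Open Scope ring_scope.
Local Open Scope classical_set_scope.
Set Implicit Arguments. Unset Strict Implicit. Unset Printing Implicit Defensive.

Lemma algM (R : realType) (A : comAlgType R) (k l : R) :
  (k * l)%:A = k%:A * l%:A :> A.
Proof. by rewrite mulr_algl scalerA. Qed.
Lemma algD (R : realType) (A : comAlgType R) (k l : R) :
  (k + l)%:A = k%:A + l%:A :> A.
Proof. exact: scalerDl. Qed.
Lemma algN (R : realType) (A : comAlgType R) (k : R) :
  (- k)%:A = - k%:A :> A.
Proof. exact: scaleNr. Qed.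
Lemma algB (R : realType) (A : comAlgType R) (k l : R) :
  (k - l)%:A = k%:A - l%:A :> A.
Proof. by rewrite algD algN. Qed.
Lemma alg1 (R : realType) (A : comAlgType R) : (1 : R)%:A = 1 :> A.
Proof. exact: scale1r. Qed.
Lemma alg0 (R : realType) (A : comAlgType R) : (0 : R)%:A = 0 :> A.
Proof. exact: scale0r. Qed.
Lemma algn (R : realType) (A : comAlgType R) (n : nat) :
  (n%:R : R)%:A = n%:R :> A.
Proof. by rewrite scaler_nat. Qed.

Ltac algs := rewrite ?algD ?algN ?algM ?algn ?alg1 ?alg0.

Lemma qm_add (R : realType) (A : comAlgType R) (M : set A) :
  quadratic_module M -> forall a b, M a -> M b -> M (a + b).
Proof. by case. Qed.
Lemma qm_sqmul (R : realType) (A : comAlgType R) (M : set A) :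
  quadratic_module M -> forall c g, M g -> M (c ^+ 2 * g).
Proof. by case. Qed.
Lemma qm1 (R : realType) (A : comAlgType R) (M : set A) :
  quadratic_module M -> M 1.
Proof. by case. Qed.
Lemma qm_sq (R : realType) (A : comAlgType R) (M : set A) :
  quadratic_module M -> forall c, M (c ^+ 2).
Proof. move=> hM c; rewrite -[c ^+ 2]mulr1; exact: qm_sqmul hM _ _ (qm1 hM). Qed.
Lemma qm0 (R : realType) (A : comAlgType R) (M : set A) :
  quadratic_module M -> M 0.
Proof. move=> hM; have := qm_sq hM 0; by rewrite expr2 mul0r. Qed.
Lemma qm_mulcst (R : realType) (A : comAlgType R) (M : set A) :
  quadratic_module M -> forall r g, 0 <= r -> M g -> M (r%:A * g).
Proof.
move=> hM r g r0 Mg.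
have -> : r%:A = (Num.sqrt r)%:A ^+ 2 :> A by rewrite expr2 -algM -expr2 sqr_sqrtr.
exact: qm_sqmul.
Qed.
Lemma qm_cst (R : realType) (A : comAlgType R) (M : set A) :
  quadratic_module M -> forall r, 0 <= r -> M r%:A.
Proof. move=> hM r r0; rewrite -[r%:A]mulr1; exact: qm_mulcst hM _ _ r0 (qm1 hM). Qed.

Lemma qm_negcst (R : realType) (A : comAlgType R) (M : set A) :
  quadratic_module M -> ~ M (-1) -> forall r, M r%:A -> 0 <= r.
Proof.
move=> hM h1 r Mr; rewrite leNgt; apply/negP => r0; apply: h1.
have -> : -1 = (- r)^-1%:A * r%:A :> A.
  by rewrite -algM invrN mulNr mulVf ?lt_eqF // algN alg1.
by apply: qm_mulcst => //; rewrite invr_ge0 oppr_ge0 ltW.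
Qed.

Definition Sos (R : realType) (A : comAlgType R) : set A :=
  [set s | forall P : set A, quadratic_module P -> P s].

Lemma sos_qm (R : realType) (A : comAlgType R) : quadratic_module (@Sos R A).
Proof.
split.
- by move=> a b ha hb P hP; apply: qm_add => //; [apply: ha | apply: hb].
- by move=> c g hg P hP; apply: qm_sqmul => //; apply: hg.
- by move=> P hP; apply: qm1.
Qed.

Lemma sos_mul (R : realType) (A : comAlgType R) (M : set A) :
  quadratic_module M -> forall s m, Sos s -> M m -> M (s * m).
Proof.
move=> hM s m hs; move: m; apply: (hs [set s | forall m, M m -> M (s * m)]).
split.
- by move=> a b ha hb m Mm; rewrite mulrDl; apply: qm_add => //; [apply: ha|apply: hb].
- by move=> c g hg m Mm; rewrite -mulrA; apply: qm_sqmul => //; apply: hg.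
- by move=> m Mm; rewrite mul1r.
Qed.

Lemma supp_mul (R : realType) (A : comAlgType R) (M : set A) :
  quadratic_module M -> forall h a, M h -> M (- h) -> M (a * h).
Proof.
move=> hM h a Mh Mnh; set H : A := (2^-1 : R)%:A.
have HH : H * H * 4%:R = 1.
  have e : (2^-1 * 2^-1 * 4%:R : R) = 1 by field.
  by rewrite /H -algn -!algM e alg1.
have -> : a * h = (H * (a + 1)) ^+ 2 * h + (H * (a - 1)) ^+ 2 * (- h).
  have -> : (H * (a + 1)) ^+ 2 * h + (H * (a - 1)) ^+ 2 * (- h) =
      (H * H * 4%:R) * (a * h) by clearbody H; ring.
  by rewrite HH mul1r.
by apply: qm_add => //; apply: qm_sqmul.
Qed.

Lemma exists_max (R : realType) (A : comAlgType R) (N : set A) :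
  quadratic_module N -> ~ N (-1) ->
  exists M : set A, [/\ quadratic_module M, N `<=` M, ~ M (-1) &
    forall M', quadratic_module M' -> M `<=` M' -> ~ M' (-1) -> M' `<=` M].
Proof.
move=> hN hN1.
pose real (M : set A) := [/\ quadratic_module M, N `<=` M & ~ M (-1)].
pose P (M : set A) := real M \/ M = set0.
have [|M [PM Mmax]] := @Zorn_bigcup A P.
  move=> F FP Ftot.
  have Freal : forall Y x, F Y -> Y x -> real Y.
    move=> Y x FY Yx; case: (FP Y FY) => // Y0; by rewrite Y0 in Yx.
  have two : forall x1 x2, (\bigcup_(X in F) X) x1 -> (\bigcup_(X in F) X) x2 ->
      exists2 Y, F Y & Y x1 /\ Y x2.
    move=> x1 x2 [Y1 FY1 Y1x] [Y2 FY2 Y2x].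
    case: (Ftot _ _ FY1 FY2) => sub.
    - by exists Y2 => //; split => //; apply: sub.
    - by exists Y1 => //; split => //; apply: sub.
  case: (pselect (exists X, F X /\ X 1)) => [[X0 [FX0 X01]]|no].
    left; have [hX0 NX0 _] := Freal _ _ FX0 X01.
    split.
    - split.
      + move=> a b ha hb; have [Y FY [Ya Yb]] := two _ _ ha hb.
        have [hY _ _] := Freal _ _ FY Ya.
        by exists Y => //; apply: qm_add.
      + move=> c g [Y FY Yg]; have [hY _ _] := Freal _ _ FY Yg.
        by exists Y => //; apply: qm_sqmul.
      + by exists X0.
    - by move=> x Nx; exists X0 => //; apply: NX0.
    - by move=> [Y FY Y1]; have [_ _] := Freal _ _ FY Y1.
  right; apply/seteqP; split => x // [Y FY Yx]; apply: no; exists Y; split => //.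
  by have [hY _ _] := Freal _ _ FY Yx; apply: qm1.
have Mreal : real M.
  case: PM => // M0; exfalso; apply: (Mmax N).
    rewrite M0; split => // sub; have := sub 1 (qm1 hN); done.
  by left; split.
have [hM NM M1] := Mreal.
exists M; split => // M' hM' MM' M'1 x M'x.
apply: contrapT => Mx; apply: (Mmax M').
  by split => // sub; apply: Mx; apply: sub.
by left; split => //; apply: subset_trans MM'.
Qed.

Lemma max_char (R : realType) (A : comAlgType R) (M : set A) :
  quadratic_module M -> archimedean_qm M -> ~ M (-1) ->
  (forall M', quadratic_module M' -> M `<=` M' -> ~ M' (-1) -> M' `<=` M) ->
  exists y : A -> R, is_char y /\ forall g, M g -> 0 <= y g.
Proof.
move=> hM arch M1 Mmax.
have negc := qm_negcst hM M1.
have L1 : forall a, ~ M a -> exists m s, [/\ M m, Sos s & -1 = m + a * s].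
  move=> a Ma.
  pose M' := [set x | exists m s, [/\ M m, Sos s & x = m + a * s]].
  have hM' : quadratic_module M'.
    split.
    - move=> x1 x2 [m1 [s1 [h1 h2 ->]]] [m2 [s2 [h3 h4 ->]]].
      exists (m1 + m2), (s1 + s2); split.
      + exact: qm_add.
      + exact: (qm_add (@sos_qm R A)).
      + ring.
    - move=> c g [m [s [h1 h2 ->]]]; exists (c ^+ 2 * m), (c ^+ 2 * s); split.
      + exact: qm_sqmul.
      + exact: (qm_sqmul (@sos_qm R A)).
      + ring.
    - exists 1, 0; split; [exact: qm1 | exact: (qm0 (@sos_qm R A)) | ring].
  case: (pselect (M' (-1))) => [[m [s [h1 h2 h3]]]|nM']; first by exists m, s.
  exfalso; apply: Ma; apply: (Mmax M' hM') => //.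
    move=> x Mx; exists x, 0; split => //; [exact: (qm0 (@sos_qm R A))|ring].
  exists 0, 1; split; [exact: qm0|exact: (qm1 (@sos_qm R A))|ring].
have L2 : forall a, M a \/ M (- a).
  move=> a; apply: contrapT => /not_orP [Ma Mna].
  have [m1 [s1 [Mm1 S1 e1]]] := L1 _ Ma.
  have [m2 [s2 [Mm2 S2 e2]]] := L1 _ Mna.
  have Ms1 : M s1 by apply: S1.
  have Mns1 : M (- s1).
    have em1 : m1 = -1 - a * s1 by rewrite e1; ring.
    have em2 : m2 = -1 - (- a) * s2 by rewrite e2; ring.
    have -> : - s1 = s2 * m1 + s1 * m2 + s2 by rewrite em1 em2; ring.
    apply: (qm_add hM); last by apply: S2.
    by apply: (qm_add hM); apply: (sos_mul hM).
  apply: M1; rewrite e1; apply: (qm_add hM) => //.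
  exact: (supp_mul hM).
have L3 : forall u, (forall e, 0 < e -> M (u + e%:A)) -> M u.
  move=> u hu; apply: contrapT => Mu.
  have [m [s [Mm Ss e1]]] := L1 _ Mu.
  have [n [n1 Mn]] := arch (- s).
  have n0 : (n%:R : R) != 0 by rewrite pnatr_eq0 -lt0n.
  pose e : R := (2 * n%:R)^-1.
  have e0 : 0 < e by rewrite /e invr_gt0 mulr_gt0 // ltr0n.
  have en : e * n%:R = 2^-1 by rewrite /e; field.
  have : M ((-1 + 2^-1)%:A).
    have -> : (-1 + 2^-1)%:A = m + s * (u + e%:A) + e%:A * (n%:R + - s).
      rewrite -en algD algM algN alg1 algn e1; ring.
    apply: (qm_add hM); last by apply: (qm_mulcst hM) => //; exact: ltW.
    by apply: (qm_add hM) => //; apply: (sos_mul hM) => //; apply: hu.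
  by move/negc; lra.
pose S a := [set r : R | M (a - r%:A)].
have hs : forall a, has_sup (S a).
  move=> a; split.
    have [n [_ Mn]] := arch a; exists (- n%:R); rewrite /S /= algN algn.
    by rewrite opprK addrC.
  have [n [_ Mn]] := arch (- a); exists n%:R => r Sr.
  have : M ((n%:R - r)%:A).
    have -> : (n%:R - r)%:A = (a - r%:A) + (n%:R + - a) by algs; ring.
    exact: (qm_add hM).
  by move/negc; lra.
pose y a := sup (S a).
have lo : forall a, M (a - (y a)%:A).
  move=> a; apply: L3 => e e0.
  have [r Sr hr] := sup_adherent e0 (hs a).
  have -> : a - (y a)%:A + e%:A = (a - r%:A) + (r - y a + e)%:A.
    by algs; ring.
  by apply: (qm_add hM) => //; apply: (qm_cst hM); rewrite /y; lra.
have hi : forall a, M ((y a)%:A - a).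
  move=> a; apply: L3 => e e0.
  case: (L2 ((y a)%:A - a + e%:A)) => // h; exfalso.
  have Se : S a (y a + e).
    by rewrite /S /=; move: h; congr M; algs; ring.
  have := sup_upper_bound (hs a) Se; rewrite -/(y a); lra.
have uniq : forall a r, M (a - r%:A) -> M (r%:A - a) -> y a = r.
  move=> a r h1 h2.
  have c1 : M ((y a - r)%:A).
    have -> : (y a - r)%:A = (a - r%:A) + ((y a)%:A - a) by algs; ring.
    exact: (qm_add hM).
  have c2 : M ((r - y a)%:A).
    have -> : (r - y a)%:A = (r%:A - a) + (a - (y a)%:A) by algs; ring.
    exact: (qm_add hM).
  by move: (negc _ c1) (negc _ c2); lra.
have uniq' : forall a r, M (a - r%:A) -> M (- (a - r%:A)) -> y a = r.
  by move=> a r h1 h2; apply: uniq => //; move: h2; rewrite opprB.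
have supp_add : forall u v, M u -> M (- u) -> M v -> M (- v) ->
    M (u + v) /\ M (- (u + v)).
  move=> u v h1 h2 h3 h4; split; first exact: (qm_add hM).
  by rewrite opprD; apply: (qm_add hM).
have supp_m : forall c u, M u -> M (- u) -> M (c * u) /\ M (- (c * u)).
  move=> c u h1 h2; split; first exact: (supp_mul hM).
  by rewrite -mulrN; apply: (supp_mul hM) => //; rewrite opprK.
have hin : forall a, M (- (a - (y a)%:A)) by move=> a; rewrite opprB.
exists y; split; last first.
  move=> g Mg; apply: negc.
  have -> : (y g)%:A = ((y g)%:A - g) + g by ring.
  exact: (qm_add hM).
split.
- by apply: uniq'; rewrite alg1 subrr ?oppr0; exact: (qm0 hM).
- move=> a b; apply: uniq'.
  + have -> : a + b - (y a + y b)%:A = (a - (y a)%:A) + (b - (y b)%:A).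
      by algs; ring.
    by case: (supp_add _ _ (lo a) (hin a) (lo b) (hin b)).
  + have -> : a + b - (y a + y b)%:A = (a - (y a)%:A) + (b - (y b)%:A).
      by algs; ring.
    by case: (supp_add _ _ (lo a) (hin a) (lo b) (hin b)).
- move=> a b.
  have E : a * b - (y a * y b)%:A = b * (a - (y a)%:A) + (y a)%:A * (b - (y b)%:A).
    by algs; ring.
  have [h1 h2] := supp_m b _ (lo a) (hin a).
  have [h3 h4] := supp_m (y a)%:A _ (lo b) (hin b).
  by apply: uniq'; rewrite E; case: (supp_add _ _ h1 h2 h3 h4).
- move=> r a.
  have E : r *: a - (r * y a)%:A = r%:A * (a - (y a)%:A).
    have -> : r *: a = r%:A * a by rewrite mulr_algl.
    by algs; ring.
  have [h1 h2] := supp_m r%:A _ (lo a) (hin a).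
  by apply: uniq'; rewrite E.
Qed.

Lemma key_char (R : realType) (A : comAlgType R) (N : set A) :
  quadratic_module N -> archimedean_qm N -> ~ N (-1) ->
  exists y : A -> R, is_char y /\ forall g, N g -> 0 <= y g.
Proof.
move=> hN arch hN1.
have [M [hM NM M1 Mmax]] := exists_max hN hN1.
have archM : archimedean_qm M.
  by move=> c; have [n [n1 Nn]] := arch c; exists n; split => //; apply: NM.
have [y [hy ypos]] := max_char hM archM M1 Mmax.
by exists y; split => // g Ng; apply: ypos; apply: NM.
Qed.

Lemma char_opp (R : realType) (A : comAlgType R) (y : A -> R) :
  is_char y -> forall x, y (- x) = - y x.
Proof. by case=> _ _ _ ys x; rewrite -scaleN1r ys mulN1r. Qed.

Lemma char_alg (R : realType) (A : comAlgType R) (y : A -> R) :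
  is_char y -> forall k, y k%:A = k.
Proof. by case=> y1 _ _ ys k; rewrite ys y1 mulr1. Qed.

Lemma char_sub (R : realType) (A : comAlgType R) (y : A -> R) :
  is_char y -> forall a b, y (a - b) = y a - y b.
Proof. by move=> hy a b; case: (hy) => _ ya _ _; rewrite ya char_opp. Qed.

Lemma Lsingle (R : realType) (B A : comAlgType R)
    (iota : {lrmorphism B -> A}) (Q' : set A) (hQ' : quadratic_module Q')
    (archQ' : archimedean_qm Q') (z : B -> R) (hz : is_char z) :
  forall a c0, z c0 = 0 -> forall d, 0 < d ->
  exists c, z c = 0 /\ Q' (a * iota c0 + d%:A + iota c).
Proof.
move=> a c0 zc0 d d0.
have [n [n1 Mn]] := archQ' (- (a ^+ 2)).
have n0 : (n%:R : R) != 0 by rewrite pnatr_eq0 -lt0n.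
have np : (0 : R) < n%:R by rewrite ltr0n.
pose t : R := d / n%:R.
have t0 : 0 < t by rewrite /t divr_gt0.
pose u : R := Num.sqrt t.
have u0 : 0 < u by rewrite /u sqrtr_gt0.
have uu : u * u = t by rewrite /u -expr2 sqr_sqrtr // ltW.
have un : u != 0 by rewrite gt_eqF.
exists ((4 * t)^-1 *: c0 ^+ 2); split.
  by case: hz => _ _ zm zs; rewrite zs expr2 zm zc0 !mulr0.
have -> : iota ((4 * t)^-1 *: c0 ^+ 2) = (4 * t)^-1%:A * (iota c0) ^+ 2.
  by rewrite linearZ /= rmorphXn mulr_algl.
have fUU : u%:A * u%:A = t%:A :> A by rewrite -algM uu.
have f2 : 2%:R * u%:A * (2 * u)^-1%:A = 1 :> A.
  have e : (2%:R * u * (2 * u)^-1 : R) = 1 by field.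
  by rewrite -algn -!algM e alg1.
have fK : (2 * u)^-1%:A * (2 * u)^-1%:A = (4 * t)^-1%:A :> A.
  have e : ((2 * u)^-1 * (2 * u)^-1 : R) = (4 * t)^-1.
    by rewrite -uu; field.
  by rewrite -algM e.
have fT : t%:A * n%:R = d%:A :> A.
  have e : (t * n%:R : R) = d by rewrite /t; field.
  by rewrite -algn -algM e.
have -> : a * iota c0 + d%:A + (4 * t)^-1%:A * iota c0 ^+ 2 =
    (u%:A * a + (2 * u)^-1%:A * iota c0) ^+ 2 + t%:A * (n%:R + - a ^+ 2).
  have E : (u%:A * a + (2 * u)^-1%:A * iota c0) ^+ 2 + t%:A * (n%:R + - a ^+ 2) =
    (u%:A * u%:A) * a ^+ 2 + (2%:R * u%:A * (2 * u)^-1%:A) * (a * iota c0)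
    + ((2 * u)^-1%:A * (2 * u)^-1%:A) * iota c0 ^+ 2 + t%:A * n%:R
    - t%:A * a ^+ 2 by ring.
  by rewrite E fUU f2 fK fT; ring.
apply: (qm_add hQ'); first exact: (qm_sq hQ').
by apply: (qm_mulcst hQ') => //; exact: ltW.
Qed.

Lemma extend (R : realType) (B A : comAlgType R)
    (iota : {lrmorphism B -> A})
    (Q' : set A) (hQ' : quadratic_module Q') (archQ' : archimedean_qm Q') :
  forall z : B -> R, KQY (iota @^-1` Q') z ->
  exists2 y : A -> R, KQY Q' y & z = y \o iota.
Proof.
move=> z [hz zpos].
have L := Lsingle iota hQ' archQ' hz.
case: (hz) => z1 zadd zmul zscal.
pose N := [set a : A | forall d, 0 < d -> exists c, z c = 0 /\ Q' (a + d%:A + iota c)].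
have Q'N : Q' `<=` N.
  move=> q Qq d d0; exists 0; split; first by rewrite -(scale0r 1) zscal mul0r.
  by rewrite raddf0 addr0; apply: (qm_add hQ') => //; apply: (qm_cst hQ'); exact: ltW.
have hN : quadratic_module N.
  split.
  - move=> a1 a2 h1 h2 d d0.
    have d2 : 0 < d / 2 by rewrite divr_gt0.
    have [c1 [zc1 Q1]] := h1 _ d2; have [c2 [zc2 Q2]] := h2 _ d2.
    exists (c1 + c2); split; first by rewrite zadd zc1 zc2 addr0.
    have dd : d%:A = (d / 2)%:A + (d / 2)%:A :> A by rewrite -algD -splitr.
    have -> : a1 + a2 + d%:A + iota (c1 + c2) =
        (a1 + (d / 2)%:A + iota c1) + (a2 + (d / 2)%:A + iota c2).
      by rewrite raddfD dd; ring.
    exact: (qm_add hQ').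
  - move=> c a ha d d0.
    have [n [n1 Mn]] := archQ' (- (c ^+ 2)).
    have n0 : (n%:R : R) != 0 by rewrite pnatr_eq0 -lt0n.
    have np : (0 : R) < n%:R by rewrite ltr0n.
    pose d1 : R := d / 2 / n%:R.
    have d10 : 0 < d1 by rewrite /d1 !divr_gt0.
    have d2 : 0 < d / 2 by rewrite divr_gt0.
    have [c1 [zc1 Q1]] := ha _ d10.
    have [c2 [zc2 Q2]] := L (- (c ^+ 2)) c1 zc1 _ d2.
    exists c2; split => //.
    have fd : d1%:A * n%:R + (d / 2)%:A = d%:A :> A.
      have e : (d1 * n%:R + d / 2 : R) = d by rewrite /d1; field.
      by rewrite -algn -algM -algD e.
    have -> : c ^+ 2 * a + d%:A + iota c2 =
       c ^+ 2 * (a + d1%:A + iota c1) + d1%:A * (n%:R + - c ^+ 2)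
       + (- c ^+ 2 * iota c1 + (d / 2)%:A + iota c2).
      by rewrite -fd; ring.
    apply: (qm_add hQ'); last exact: Q2.
    apply: (qm_add hQ'); first exact: (qm_sqmul hQ').
    by apply: (qm_mulcst hQ') => //; exact: ltW.
  - exact: Q'N (qm1 hQ').
have archN : archimedean_qm N.
  by move=> c; have [n [n1 Qn]] := archQ' c; exists n; split => //; apply: Q'N.
have N1 : ~ N (-1).
  move=> hN1; have d2 : (0 : R) < 2^-1 by rewrite invr_gt0.
  have [c [zc Qc]] := hN1 _ d2.
  have : 0 <= z (c + (-1 + 2^-1)%:A).
    have ha : iota ((-1 + 2^-1)%:A) = (-1 + 2^-1)%:A := rmorph_alg iota _.
    apply: zpos; rewrite /preimage /=.
    have -> : iota (c + (-1 + 2^-1)%:A) = -1 + 2^-1%:A + iota c.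
      transitivity (iota c + (-1 + 2^-1)%:A); last by algs; ring.
      by rewrite (raddfD iota c); congr (_ + _); exact: rmorph_alg.
    exact: Qc.
  by rewrite zadd zc (char_alg hz) add0r; lra.
have [y [hy ypos]] := key_char hN archN N1.
exists y; first by split => // g Qg; apply: ypos; apply: Q'N.
apply/funext => b /=.
pose c0 := b - (z b)%:A.
have zc0 : z c0 = 0 by rewrite /c0 (char_sub hz) (char_alg hz) subrr.
have p1 : 0 <= y (iota c0).
  by apply: ypos => d d0; have [c' [h1 h2]] := L 1 c0 zc0 d d0; exists c'; rewrite -[iota c0]mul1r.
have p2 : 0 <= y (- iota c0).
  by apply: ypos => d d0; have [c' [h1 h2]] := L (-1) c0 zc0 d d0; exists c'; rewrite -[- iota c0]mulN1r.
have : y (iota c0) = 0 by move: p2; rewrite (char_opp hy); lra.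
have e : iota c0 = iota b - (z b)%:A.
  by rewrite /c0 raddfB; congr (_ - _); exact: rmorph_alg.
by rewrite e (char_sub hy) (char_alg hy); lra.
Qed.

Theorem proposition3p7 (R : realType) (B A : comAlgType R)
    (iota : {lrmorphism B -> A}) (iota_inj : injective iota)
    (Q' : set A) (hQ' : quadratic_module Q') (archQ' : archimedean_qm Q') :
  let Q : set B := iota @^-1` Q' in
  (forall z : B -> R, KQY Q z -> exists2 y : A -> R, KQY Q' y & z = y \o iota)
  /\
  (forall (X : Type) (ev : X -> A -> R),
     (forall x, is_char (ev x)) ->
     (forall a b : A, (forall x, ev x a = ev x b) -> a = b) ->
     (forall x g, Q' g -> 0 <= ev x g) ->
     let mA := [set ev x | x in [set: X]] in
     let mB := [set ev x \o iota | x in [set: X]] in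
     (mA = KQY Q' -> mB = KQY Q) /\
     (Yclosure mA = KQY Q' -> Yclosure mB = KQY Q)).
Proof.
move=> Q; split.
  by move=> z hz; apply: extend.
move=> X ev evc evsep evpos mA mB.
have mBsub : mB `<=` KQY Q.
  move=> _ [x _ <-]; split; last by move=> g Qg /=; apply: evpos.
  case: (evc x) => e1 ea em es; split => /=.
  - by rewrite rmorph1.
  - by move=> a b; rewrite raddfD ea.
  - by move=> a b; rewrite rmorphM em.
  - by move=> r a; rewrite linearZ /= es.
split.
  move=> hA; apply/seteqP; split => // z hz.
  have [y yK ->] := extend hQ' archQ' hz.
  by rewrite -hA in yK; case: yK => x _ <-; exists x.
move=> hA; apply/seteqP; split.
  move=> y [hy hcl]; split => // g Qg.
  rewrite leNgt; apply/negP => yg.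
  have yg' : 0 < - y g by rewrite oppr_gt0.
  have [w [x _ ex] hw] := hcl [:: g] _ yg'.
  have := hw g (mem_head _ _); have := evpos x (iota g) Qg.
  rewrite -ex /= ltr_norml => p /andP [h1 h2]; move: p h2; clear; lra.
move=> z hz; have [y yK ezy] := extend hQ' archQ' hz.
split; first by case: hz.
rewrite -hA in yK; case: yK => hy hcl.
move=> cs eps e0; have [w [x _ <-] hw] := hcl (map iota cs) eps e0.
exists (ev x \o iota); first by exists x.
by move=> c cin; rewrite ezy /=; apply: hw; exact: map_f.
Qed.
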